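(* The map $\phi_s : \mathbf{ASM} \to \mathbb{K}(q)$ linearly defined, for any $s \in \{\operatorname{io}, \operatorname{oi}\}$ and any ASM $\delta$ of size $n$ by $\phi_s(\mathbf{F}_{M^\delta}) := \frac{q^{s(\delta)}}{n!}$ is an algebra morphism.
   Context: Let $\mathbb{K}$ be a field of characteristic zero. An alternating sign matrix (ASM) of size $n$ is an $n\times n$ matrix with entries in $\{0,+,-\}$ such that every row and column starts and ends (ignoring zeros) with $+$ and in each row and column the $+$ and $-$ alternate. For an ASM $\delta$, $M^\delta$ is the $\{0,1\}$-matrix with $M^\delta_{ij}=1$ iff $\delta_{ij}\ne 0$. $\mathbf{PM}_1$ is the Hopf algebra with basis $(\mathbf{F}_M)$ indexed by $\{0,1\}$-square matrices with no null row or column, with product $\mathbf{F}_{M_1}\cdot\mathbf{F}_{M_2} = \sum \mathbf{F}_M$ over all $M$ obtained by shuffling the columns of $M_1$ (with an $n_2\times n_1$ zero block placed below) with the columns of $M_2$ (with an $n_1 \times n_2$ zero block placed above), $n_i$ the sizes. $\mathbf{ASM}$ is the Hopf subalgebra of $\mathbf{PM}_1$ spanned by the $\mathbf{F}_{M^\delta}$, graded by the size of $\delta$. Via the bijection between ASMs and six-vertex configurations with domain wall boundary conditions, a $+$ entry corresponds to a vertex of type $\operatorname{oi}$ and a $-$ entry to a vertex of type $\operatorname{io}$; thus $\operatorname{oi}(\delta)$ is the number of $+$ entries of $\delta$ and $\operatorname{io}(\delta)$ is the number of $-$ entries of $\delta$. *)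

(* Defs.v *)
From HB Require Import structures.
From mathcomp Require Import all_boot all_order all_algebra.
From mathcomp Require Import finmap.
From mathcomp.multinomials Require Import monalg.
Set Implicit Arguments. Unset Strict Implicit. Unset Printing Implicit Defensive.
Import Order.TTheory GRing.Theory Num.Theory.
Local Open Scope ring_scope.

(* Entries in {0,+,-} are encoded as option bool:
   None = 0, Some true = +, Some false = -.                                   *)
Definition signmx (n : nat) := 'M[option bool]_n.

(* A line (row or column, read in order) is alternating when, ignoring zeros,
   it reads + - + - ... + : odd length, and + at even positions, - at odd.   *)
Definition alt_line (l : seq (option bool)) : bool :=
  let s := pmap id l in
  odd (size s) && (s == [seq ~~ odd i | i <- iota 0 (size s)]).

Definition is_ASM (n : nat) (d : signmx n) : bool :=
  [forall i : 'I_n, alt_line [seq d i j | j <- enum 'I_n]] &&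
  [forall j : 'I_n, alt_line [seq d i j | i <- enum 'I_n]].

Definition supp_mx (n : nat) (d : signmx n) : 'M[bool]_n :=
  \matrix_(i, j) (d i j != None).

Inductive stat := io | oi.
Definition stat_val (s : stat) (n : nat) (d : signmx n) : nat :=
  match s with
  | oi => #|[set ij : 'I_n * 'I_n | d ij.1 ij.2 == Some true]|
  | io => #|[set ij : 'I_n * 'I_n | d ij.1 ij.2 == Some false]|
  end.

Definition PMidx := {n : nat & 'M[bool]_n}.
Definition PMidx_of (n : nat) (M : 'M[bool]_n) : PMidx := Tagged (fun n => 'M[bool]_n) M.

Definition PM (K : fieldType) := {malg K[PMidx]}.
Definition FM (K : fieldType) (n : nat) (M : 'M[bool]_n) : PM K := << PMidx_of M >>.

Definition mget (n : nat) (M : 'M[bool]_n) (i j : nat) : bool :=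
  match (insub i : option 'I_n), (insub j : option 'I_n) with
  | Some i', Some j' => M i' j'
  | _, _ => false
  end.

Definition rank_in (m : nat) (A : {set 'I_m}) (j : 'I_m) : nat :=
  #|[set k in A | (k < j)%N]|.

(* The column shuffle: the columns at positions in S (in increasing order) are
   the columns of M1 with an n2 x n1 zero block placed below, the remaining
   columns are the columns of M2 with an n1 x n2 zero block placed above.    *)
Definition shuffle_mx (n1 n2 : nat) (M1 : 'M[bool]_n1) (M2 : 'M[bool]_n2)
    (S : {set 'I_(n1 + n2)}) : 'M[bool]_(n1 + n2) :=
  \matrix_(i, j)
    if j \in S then (i < n1)%N && mget M1 i (rank_in S j)
    else (n1 <= i)%N && mget M2 (i - n1) (rank_in (~: S) j).

Definition PMprod_basis (K : fieldType) (x y : PMidx) : PM K :=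
  \sum_(S : {set 'I_(tag x + tag y)} | #|S| == tag x)
     FM K (shuffle_mx (tagged x) (tagged y) S).

Definition PMmul (K : fieldType) (a b : PM K) : PM K :=
  \sum_(x <- msupp a) \sum_(y <- msupp b) (a@_x * b@_y) *: PMprod_basis K x y.

Definition PMone (K : fieldType) : PM K := FM K (0 : 'M[bool]_0).

Definition is_ASM_supp (x : PMidx) : Prop :=
  exists d : signmx (tag x), is_ASM d /\ supp_mx d = tagged x.

Definition in_ASM (K : fieldType) (a : PM K) : Prop :=
  forall x, x \in msupp a -> is_ASM_supp x.

Definition KQ (K : fieldType) := {fraction {poly K}}.
Notation "x %:F" := (@tofrac _ x).
Definition qvar (K : fieldType) : KQ K := ('X : {poly K})%:F.

(* value on a basis index: the (unique) ASM delta with M^delta = M is picked;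
   value q^{s(delta)} / n!  (0 on indices that are not ASM supports,
   which are outside the domain ASM anyway) *)
Definition phi_basis (K : fieldType) (s : stat) (x : PMidx) : KQ K :=
  match [pick d : signmx (tag x) | is_ASM d && (supp_mx d == tagged x)] with
  | Some d => qvar K ^+ stat_val s d / ((tag x)`!)%:R
  | None => 0
  end.

Definition phi (K : fieldType) (s : stat) (a : PM K) : KQ K :=
  \sum_(x <- msupp a) ((a@_x)%:P)%:F * phi_basis K s x.

(* Main.v *)
Require Import Defs.
From HB Require Import structures.
From mathcomp Require Import all_boot all_order all_algebra.
From mathcomp Require Import finmap.
From mathcomp.multinomials Require Import monalg.
From mathcomp Require Import ring.
Set Implicit Arguments. Unset Strict Implicit. Unset Printing Implicit Defensive.
Import GRing.Theory.

Lemma card_count (T : finType) (P : pred T) : #|[pred x | P x]| = count P (enum T).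
Proof.
rewrite cardE -deprecated_filter_index_enum size_filter.
congr count; rewrite -[RHS]deprecated_filter_index_enum filter_predT //.
Qed.

Definition sget n (d : signmx n) (i j : nat) : option bool :=
  match (insub i : option 'I_n), (insub j : option 'I_n) with
  | Some i', Some j' => d i' j'
  | _, _ => None
  end.

Lemma sgetE n (d : signmx n) (i j : 'I_n) : sget d i j = d i j.
Proof. by rewrite /sget !valK. Qed.

Lemma sget_mx n (f : nat -> nat -> option bool) i j : i < n -> j < n ->
  sget (((\matrix_(i0, j0) f (val i0) (val j0))%R : signmx n)) i j = f i j.
Proof.
move=> hi hj; rewrite /sget.
case: insubP => [i' _ ei|]; last by rewrite hi.
case: insubP => [j' _ ej|]; last by rewrite hj.
by rewrite mxE ei ej.
Qed.

Lemma mget_supp n (d : signmx n) i j : mget (supp_mx d) i j = (sget d i j != None).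
Proof.
rewrite /mget /sget; case: (insub i) => [i'|] //; case: (insub j) => [j'|] //.
by rewrite mxE.
Qed.

Definition rowl n (d : signmx n) (i : nat) := [seq sget d i j | j <- iota 0 n].
Definition coll n (d : signmx n) (j : nat) := [seq sget d i j | i <- iota 0 n].

Lemma map_enum_ord (A : Type) n (F : nat -> A) :
  [seq F (val j) | j <- enum 'I_n] = [seq F j | j <- iota 0 n].
Proof. by rewrite -val_enum_ord -map_comp. Qed.

Lemma is_ASME n (d : signmx n) :
  is_ASM d = [forall i : 'I_n, alt_line (rowl d i)] && [forall j : 'I_n, alt_line (coll d j)].
Proof.
congr andb; apply: eq_forallb => i; congr alt_line.
  by rewrite /rowl -map_enum_ord; apply: eq_map => j; rewrite sgetE.
by rewrite /coll -map_enum_ord; apply: eq_map => j; rewrite sgetE.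
Qed.

Lemma alt_lineE (l l' : seq (option bool)) : pmap id l = pmap id l' ->
  alt_line l = alt_line l'.
Proof. by rewrite /alt_line => ->. Qed.

Lemma alt_uniq_gen (l l' : seq (option bool)) k :
  map (fun o => o != None) l = map (fun o => o != None) l' ->
  pmap id l = [seq ~~ odd i | i <- iota k (size (pmap id l))] ->
  pmap id l' = [seq ~~ odd i | i <- iota k (size (pmap id l'))] -> l = l'.
Proof.
elim: l l' k => [|a l IH] [|b l'] k //= [eab eml].
case: a b eab => [a|] [b|] //= _.
  move=> [-> h1] [-> h2]; congr (_ :: _); exact: (IH l' k.+1).
move=> h1 h2; congr (_ :: _); exact: (IH l' k).
Qed.

Lemma ASM_uniq n (d d' : signmx n) : is_ASM d -> is_ASM d' -> supp_mx d = supp_mx d' -> d = d'.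
Proof.
rewrite !is_ASME => /andP[/forallP hd _] /andP[/forallP hd' _] hs.
apply/matrixP => i j.
have e : rowl d i = rowl d' i.
  move: (hd i) (hd' i); rewrite /alt_line => /andP[_ /eqP h1] /andP[_ /eqP h2].
  apply: (alt_uniq_gen _ h1 h2); rewrite /rowl -!map_comp; apply/eq_in_map => k.
  rewrite mem_iota add0n => /andP[_ hk] /=.
  by rewrite -!mget_supp hs.
have := (eq_in_map _ _ (iota 0 n)).2 e j; rewrite mem_iota add0n ltn_ord => /(_ isT).
by rewrite !sgetE.
Qed.

Lemma pmap_shuf (P : nat -> bool) (h : nat -> option bool) m :
  pmap id [seq (if P j then h (count P (iota 0 j)) else None) | j <- iota 0 m]
  = pmap id [seq h k | k <- iota 0 (count P (iota 0 m))].
Proof.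
elim: m => // m IH; rewrite -addn1 iotaD map_cat pmap_cat count_cat IH /= add0n.
case: (P m) => /=.
  by rewrite addn1 -addn1 iotaD map_cat pmap_cat /= add0n.
by rewrite cats0 !addn0.
Qed.

Lemma pmap_none (T : Type) (s : seq T) : pmap id [seq (None : option bool) | _ <- s] = [::].
Proof. by elim: s. Qed.

Definition PA m (A : {set 'I_m}) (k : nat) : bool :=
  if (insub k : option 'I_m) is Some k' then k' \in A else false.

Lemma PAE m (A : {set 'I_m}) (k : 'I_m) : PA A k = (k \in A).
Proof. by rewrite /PA valK. Qed.

Lemma PAC m (A : {set 'I_m}) (k : nat) : k < m -> PA (~: A) k = ~~ PA A k.
Proof. by move=> hk; rewrite /PA insubT /= inE. Qed.

Lemma card_rank m (A : {set 'I_m}) j : j <= m ->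
  #|[set k in A | k < j]| = count (PA A) (iota 0 j).
Proof.
move=> hj.
have -> : #|[set k in A | k < j]| = #|[pred k : 'I_m | PA A k && (k < j)]|.
  by apply: eq_card => k; rewrite !inE PAE.
rewrite card_count.
rewrite (_ : count _ (enum 'I_m) = count (fun k => PA A k && (k < j)) (iota 0 m)); last first.
  by rewrite -val_enum_ord count_map.
have -> : iota 0 m = iota 0 j ++ iota j (m - j) by rewrite -iotaD subnKC.
rewrite count_cat.
rewrite (@eq_in_count _ _ pred0 (iota j _)) ?count_pred0 ?addn0; last first.
  by move=> k; rewrite mem_iota => /andP[hk _] /=; rewrite ltnNge hk andbF.
by apply: eq_in_count => k; rewrite mem_iota add0n => /andP[_ ->]; rewrite andbT.
Qed.

Lemma card_PA m (A : {set 'I_m}) : #|A| = count (PA A) (iota 0 m).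
Proof.
rewrite -card_rank //; apply: eq_card => k; rewrite !inE ltn_ord andbT //.
Qed.

Lemma rank_inE m (A : {set 'I_m}) (j : 'I_m) : rank_in A j = count (PA A) (iota 0 j).
Proof. by rewrite /rank_in card_rank // ltnW. Qed.

Lemma count_lt (P : pred nat) j m : P j -> j < m -> count P (iota 0 j) < count P (iota 0 m).
Proof.
move=> pj hj.
have -> : m = j + (1 + (m - j.+1)) by rewrite addnA addn1 subnKC.
rewrite iotaD iotaD !count_cat /= pj add0n.
by rewrite -[X in X < _]addn0 ltn_add2l.
Qed.

Definition shf n1 n2 (d1 : signmx n1) (d2 : signmx n2) (S : {set 'I_(n1 + n2)}) (i j : nat) : option bool :=
  if PA S j then (if i < n1 then sget d1 i (count (PA S) (iota 0 j)) else None)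
  else (if n1 <= i then sget d2 (i - n1) (count (PA (~: S)) (iota 0 j)) else None).

Definition shuf n1 n2 (d1 : signmx n1) (d2 : signmx n2) (S : {set 'I_(n1 + n2)}) : signmx (n1 + n2) :=
  (\matrix_(i, j) shf d1 d2 S (val i) (val j))%R.

Section Shuf.
Variables (n1 n2 : nat) (d1 : signmx n1) (d2 : signmx n2) (S : {set 'I_(n1 + n2)}).
Hypothesis hS : #|S| = n1.

Lemma shuf_supp : supp_mx (shuf d1 d2 S) = shuffle_mx (supp_mx d1) (supp_mx d2) S.
Proof.
apply/matrixP => i j; rewrite !mxE /shf PAE !rank_inE !mget_supp.
by case: (j \in S); case: (ltnP i n1).
Qed.

Lemma rowl_shuf i : i < n1 + n2 -> rowl (shuf d1 d2 S) i = [seq shf d1 d2 S i j | j <- iota 0 (n1 + n2)].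
Proof. by move=> hi; apply/eq_in_map => j; rewrite mem_iota => /andP[_ hj]; rewrite /shuf sget_mx. Qed.

Lemma coll_shuf j : j < n1 + n2 -> coll (shuf d1 d2 S) j = [seq shf d1 d2 S i j | i <- iota 0 (n1 + n2)].
Proof. by move=> hj; apply/eq_in_map => i; rewrite mem_iota => /andP[_ hi]; rewrite /shuf sget_mx. Qed.

Lemma cardSC : #|~: S| = n2.
Proof. by have := cardsC S; rewrite card_ord hS => /eqP; rewrite eqn_add2l => /eqP. Qed.

Lemma row_lo i : i < n1 -> pmap id (rowl (shuf d1 d2 S) i) = pmap id (rowl d1 i).
Proof.
move=> hi; rewrite rowl_shuf ?ltn_addr //.
rewrite (_ : [seq _ | j <- _] = [seq (if PA S j then sget d1 i (count (PA S) (iota 0 j)) else None) | j <- iota 0 (n1 + n2)]); last first.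
  by apply: eq_map => j; rewrite /shf hi leqNgt hi; case: (PA S j).
by rewrite pmap_shuf -card_PA hS.
Qed.

Lemma row_hi i : n1 <= i -> i < n1 + n2 -> pmap id (rowl (shuf d1 d2 S) i) = pmap id (rowl d2 (i - n1)).
Proof.
move=> hi1 hi; rewrite rowl_shuf //.
rewrite (_ : [seq _ | j <- _] = [seq (if PA (~: S) j then sget d2 (i - n1) (count (PA (~: S)) (iota 0 j)) else None) | j <- iota 0 (n1 + n2)]); last first.
  apply/eq_in_map => j; rewrite mem_iota => /andP[_ hj].
  by rewrite /shf PAC // ltnNge hi1; case: (PA S j).
by rewrite pmap_shuf -card_PA cardSC.
Qed.

Lemma col_S j : j < n1 + n2 -> PA S j ->
  pmap id (coll (shuf d1 d2 S) j) = pmap id (coll d1 (count (PA S) (iota 0 j))).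
Proof.
move=> hj pj; rewrite coll_shuf // iotaD map_cat pmap_cat add0n.
rewrite (_ : [seq _ | i <- iota n1 n2] = [seq None | _ <- iota n1 n2]); last first.
  by apply/eq_in_map => i; rewrite mem_iota => /andP[hi _]; rewrite /shf pj ltnNge hi.
rewrite pmap_none cats0; congr (pmap id _); apply/eq_in_map => i.
by rewrite mem_iota => /andP[_ hi]; rewrite /shf pj hi.
Qed.

Lemma col_nS j : j < n1 + n2 -> ~~ PA S j ->
  pmap id (coll (shuf d1 d2 S) j) = pmap id (coll d2 (count (PA (~: S)) (iota 0 j))).
Proof.
move=> hj pj; rewrite coll_shuf // iotaD map_cat pmap_cat add0n.
rewrite (_ : [seq _ | i <- iota 0 n1] = [seq None | _ <- iota 0 n1]); last first.
  by apply/eq_in_map => i; rewrite mem_iota => /andP[_ hi]; rewrite /shf (negbTE pj) leqNgt hi.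
rewrite pmap_none /=; congr (pmap id _).
rewrite -[n1 in iota n1]addn0 iotaDl -map_comp; apply/eq_map => i /=.
by rewrite /shf (negbTE pj) leq_addr addKn.
Qed.

Lemma shuf_ASM : is_ASM d1 -> is_ASM d2 -> is_ASM (shuf d1 d2 S).
Proof.
rewrite !is_ASME => /andP[/forallP r1 /forallP c1] /andP[/forallP r2 /forallP c2].
apply/andP; split; apply/forallP => i.
  case: (ltnP i n1) => hi.
    by rewrite (alt_lineE (row_lo hi)); exact: (r1 (Ordinal hi)).
  have hi2 : i - n1 < n2 by rewrite ltn_subLR.
  by rewrite (alt_lineE (row_hi hi (ltn_ord i))); exact: (r2 (Ordinal hi2)).
case: (boolP (PA S i)) => pj.
  have hr : count (PA S) (iota 0 i) < n1 by have := count_lt pj (ltn_ord i); rewrite -card_PA hS.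
  by rewrite (alt_lineE (col_S (ltn_ord i) pj)); exact: (c1 (Ordinal hr)).
have pj' : PA (~: S) i by rewrite PAC.
have hr : count (PA (~: S)) (iota 0 i) < n2 by have := count_lt pj' (ltn_ord i); rewrite -card_PA cardSC.
by rewrite (alt_lineE (col_nS (ltn_ord i) pj)); exact: (c2 (Ordinal hr)).
Qed.

End Shuf.

Definition sb (s : stat) := match s with oi => true | io => false end.

Lemma enum_index (T : finType) : enum T = index_enum T.
Proof. by rewrite -deprecated_filter_index_enum filter_predT. Qed.

Lemma count_pmap b (l : seq (option bool)) : count (pred1 (Some b)) l = count (pred1 b) (pmap id l).
Proof. by elim: l => //= [[x|] l IH] /=; rewrite IH. Qed.

Lemma stat_rows n (d : signmx n) s :
  stat_val s d = \sum_(i < n) count (pred1 (sb s)) (pmap id (rowl d i)).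
Proof.
have -> : stat_val s d = #|[set ij : 'I_n * 'I_n | d ij.1 ij.2 == Some (sb s)]| by case: s.
rewrite -sum1dep_card (eq_bigl (fun p => xpredT p.1 && (d p.1 p.2 == Some (sb s)))) //.
rewrite -(pair_big_dep xpredT (fun i j => d i j == Some (sb s)) (fun _ _ => 1)).
apply: eq_bigr => i _.
transitivity (count (fun j => d i j == Some (sb s)) (enum 'I_n)).
  by rewrite sum1_count enum_index.
rewrite -count_pmap /rowl -map_enum_ord [in RHS]count_map.
by apply: eq_count => j /=; rewrite sgetE.
Qed.

Lemma shuf_stat n1 n2 (d1 : signmx n1) (d2 : signmx n2) (S : {set 'I_(n1 + n2)}) s :
  #|S| = n1 -> stat_val s (shuf d1 d2 S) = stat_val s d1 + stat_val s d2.
Proof.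
move=> hS; rewrite !stat_rows big_split_ord; congr (_ + _); apply: eq_bigr => i _ /=.
  by rewrite row_lo.
by rewrite row_hi ?leq_addr ?ltn_add2l // addKn.
Qed.

Local Open Scope ring_scope.
Lemma phi_seq (K : fieldType) s (a : PM K) (r : seq PMidx) : uniq r -> {subset msupp a <= r} ->
  phi s a = \sum_(x <- r) ((a@_x)%:P)%:F * phi_basis K s x.
Proof.
move=> ur sub; rewrite (bigID (fun x => x \in msupp a)) /=.
rewrite [X in _ = _ + X]big1 ?addr0; last first.
  by move=> x /mcoeff_outdom ->; rewrite polyC0 tofrac0 mul0r.
rewrite -big_filter /phi; apply: perm_big; apply: uniq_perm.
- exact: fset_uniq.
- exact: filter_uniq.
by move=> x; rewrite mem_filter; case: (boolP (x \in msupp a)) => // /sub ->.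
Qed.

Lemma phi_lin (K : fieldType) s (c : K) (a b : PM K) :
  phi s (c *: a + b) = ((c%:P)%:F) * phi s a + phi s b.
Proof.
set r := undup (msupp a ++ msupp b).
have ur : uniq r by apply: undup_uniq.
have sa : {subset msupp a <= r} by move=> x xa; rewrite mem_undup mem_cat xa.
have sb : {subset msupp b <= r} by move=> x xa; rewrite mem_undup mem_cat xa orbT.
have sc : {subset msupp (c *: a + b) <= r}.
  move=> x /(fsubsetP (msuppD_le _ _)); rewrite in_fsetU => /orP[xa|xb].
    by rewrite mem_undup mem_cat (fsubsetP (msuppZ_le _ _) _ xa).
  by rewrite mem_undup mem_cat xb orbT.
rewrite (phi_seq s ur sa) (phi_seq s ur sb) (phi_seq s ur sc).
rewrite mulr_sumr -big_split /=; apply: eq_bigr => x _.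
by rewrite mcoeffD mcoeffZ polyCD polyCM tofracD tofracM mulrDl mulrA.
Qed.

Lemma phi0 (K : fieldType) s : phi s (0 : PM K) = 0.
Proof. by rewrite /phi msupp0 big_nil. Qed.

Lemma phiZ (K : fieldType) s (c : K) (a : PM K) : phi s (c *: a) = ((c%:P)%:F) * phi s a.
Proof. by rewrite -[c *: a]addr0 phi_lin phi0 addr0. Qed.

Lemma phiD (K : fieldType) s (a b : PM K) : phi s (a + b) = phi s a + phi s b.
Proof. by rewrite -[a in LHS]scale1r phi_lin polyC1 tofrac1 mul1r. Qed.

Lemma phi_sum (K : fieldType) s (I : Type) (r : seq I) (P : pred I) (F : I -> PM K) :
  phi s (\sum_(i <- r | P i) F i) = \sum_(i <- r | P i) phi s (F i).
Proof. exact: (big_morph _ (@phiD K s) (@phi0 K s)). Qed.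

Lemma phiU (K : fieldType) s (x : PMidx) : phi s (<< x >> : PM K) = phi_basis K s x.
Proof. by rewrite /phi msuppU oner_eq0 big_seq_fset1 mcoeffU eqxx mulr1n polyC1 tofrac1 mul1r. Qed.



Lemma arith (F : fieldType) (A B c f1 f2 : F) : c != 0 ->
  A * B / (c * f1 * f2) * c = A / f1 * (B / f2).
Proof.
move=> hc; rewrite !invfM -!mulrA [f2^-1 * c]mulrC [f1^-1 * (c * _)]mulrCA mulKf //.
by rewrite [RHS]mulrA -[RHS]mulrA; congr (A * _); rewrite mulrCA.
Qed.

Lemma phi_basis_ASM (K : fieldType) s n (d : signmx n) : is_ASM d ->
  phi_basis K s (PMidx_of (supp_mx d)) = qvar K ^+ stat_val s d / (n`!)%:R.
Proof.
move=> ad; rewrite /phi_basis /=.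
case: pickP => [d' /andP[ad' /eqP sd'] | /(_ d)]; first by rewrite (ASM_uniq ad' ad sd').
by rewrite ad eqxx.
Qed.

Lemma natKQ_neq0 (K : fieldType) (charK : [pchar K] =i pred0) n : n != 0%N -> (n%:R : KQ K) != 0.
Proof.
move=> hn; rewrite -tofrac1 -tofracMn tofrac_eq0 -polyC1 -polyCMn polyC_eq0.
by rewrite ((pcharf0P K).1 charK).
Qed.

Lemma phi_prod (K : fieldType) (charK : [pchar K] =i pred0) s n1 n2 (d1 : signmx n1) (d2 : signmx n2) :
  is_ASM d1 -> is_ASM d2 ->
  phi s (PMprod_basis K (PMidx_of (supp_mx d1)) (PMidx_of (supp_mx d2))) =
  phi_basis K s (PMidx_of (supp_mx d1)) * phi_basis K s (PMidx_of (supp_mx d2)).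
Proof.
move=> a1 a2; rewrite !phi_basis_ASM // /PMprod_basis phi_sum /=.
rewrite (eq_bigr (fun _ => qvar K ^+ (stat_val s d1 + stat_val s d2) / ((n1 + n2)`!)%:R)); last first.
  move=> S /eqP hS; rewrite /FM phiU -shuf_supp phi_basis_ASM ?shuf_ASM // shuf_stat //.
rewrite (eq_bigl (fun S => S \in [set S : {set 'I_(n1 + n2)} | #|S| == n1])); last first.
  by move=> S; rewrite inE.
rewrite sumr_const card_draws card_ord.
have hf : ((n1 + n2)`!)%:R = ('C(n1 + n2, n1))%:R * (n1`!)%:R * (n2`!)%:R :> KQ K.
  by have := bin_fact (leq_addr n2 n1); rewrite addKn => <-; rewrite !natrM mulrA.
have h1 := natKQ_neq0 charK (lt0n_neq0 (fact_gt0 n1)).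
have h2 := natKQ_neq0 charK (lt0n_neq0 (fact_gt0 n2)).
have h3 : ('C(n1 + n2, n1)%:R : KQ K) != 0.
  by apply: natKQ_neq0 => //; rewrite -lt0n bin_gt0 leq_addr.
by rewrite hf exprD -(mulr_natr (_ / _)) arith.
Qed.

Theorem proposition4p3 (K : fieldType) (charK : [pchar K] =i pred0) (s : stat) :
  phi s (PMone K) = 1 /\
  (forall (c : K) (a b : PM K), phi s (c *: a + b) = ((c%:P)%:F) * phi s a + phi s b) /\
  (forall a b : PM K, in_ASM a -> in_ASM b ->
     phi s (PMmul a b) = phi s a * phi s b).
Proof.
split.
  pose d0 : signmx 0 := (\matrix_(i, j) None)%R.
  have e0 : (0 : 'M[bool]_0) = supp_mx d0 by apply/matrixP => -[].
  have a0 : is_ASM d0 by apply/andP; split; apply/forallP => -[].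
  rewrite /PMone /FM phiU e0 phi_basis_ASM // stat_rows big_ord0 expr0 fact0.
  by rewrite divr1.
split; first exact: phi_lin.
move=> a b ha hb.
transitivity (\sum_(x <- msupp a) \sum_(y <- msupp b)
   ((((a@_x)%:P)%:F * phi_basis K s x) * (((b@_y)%:P)%:F * phi_basis K s y))); last first.
  by rewrite /phi big_distrlr.
rewrite /PMmul phi_sum !big_seq; apply: eq_bigr => x xa.
rewrite phi_sum !big_seq; apply: eq_bigr => y yb; rewrite phiZ.
move: (ha x xa) (hb y yb) => [d1 [ad1 sd1]] [d2 [ad2 sd2]].
case: x xa d1 ad1 sd1 => n1 M1 /= _ d1 ad1 <-.
case: y yb d2 ad2 sd2 => n2 M2 /= _ d2 ad2 <-.
by rewrite (phi_prod charK) // polyCM tofracM mulrACA.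
Qed.
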